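(* Let $\lambda\in\mathbb{C}$ with $|\lambda|\neq 0,1$, let $l\ge 0$, and let $\Lambda$ be the $(l+1)\times(l+1)$ matrix with all diagonal entries equal to $\lambda$, all entries directly below the diagonal equal to $1$, and all other entries $0$. Let $S$ be a set with a bijection $R\colon S\to S$, and let $h\colon S\to\mathbb{C}^{l+1}$ be a function such that $\|h\circ R-\Lambda^{-1}h\|$ is bounded on $S$. Then there is a unique function $\widehat{h}\colon S\to\mathbb{C}^{l+1}$ satisfying $\widehat h\circ R=\Lambda^{-1}\widehat h$ and such that $\|\widehat h-h\|$ is bounded on $S$.
   Context: $\|\cdot\|$ denotes the sup norm on $\mathbb{C}^{l+1}$: $\|(a_0,\dots,a_l)\|=\max_i|a_i|$. *)

(* Defs.v *)
From HB Require Import structures.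
From mathcomp Require Import all_boot all_order all_algebra.
From mathcomp Require Import complex.
From mathcomp Require Import reals.
Set Implicit Arguments. Unset Strict Implicit. Unset Printing Implicit Defensive.
Import Order.TTheory GRing.Theory Num.Theory.
Local Open Scope ring_scope.

Definition supnorm (R : realType) (n : nat) (v : 'cV[R[i]]_n) : R :=
  \big[Num.max/0]_(k < n) Normc.normc (v k 0).

Definition Lambda (R : realType) (l : nat) (lam : R[i]) : 'M[R[i]]_(l.+1) :=
  \matrix_(a, b) (if a == b then lam
                  else if val a == (val b).+1 then 1 else 0).

Definition bounded_on (R : realType) (S : Type) (n : nat)
  (f : S -> 'cV[R[i]]_n) : Prop :=
  exists M : R, forall s, supnorm (f s) <= M.

(* Main.v *)
From HB Require Import structures.
From mathcomp Require Import all_boot all_order all_algebra.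
From mathcomp Require Import complex.
From mathcomp Require Import reals.
From mathcomp Require Import all_classical all_reals all_analysis.
Require Import Defs.
Import Order.TTheory GRing.Theory Num.Theory.
Import numFieldNormedType.Exports.
Local Open Scope ring_scope.
Local Open Scope classical_set_scope.

Section S.
Variable R : realType.

Lemma real_dom (a : nat -> R) (M r : R) : 0 <= r -> r < 1 ->
  (forall k, `|a k| <= M * r ^+ k) ->
  cvgn (series a) /\ `|limn (series a)| <= M / (1 - r).
Proof.
move=> r0 r1 ha.
have M0 : 0 <= M by have := ha 0%N; rewrite expr0 mulr1; apply: le_trans.
have rn : `|r| < 1 by rewrite ger0_norm.
have cg : cvgn (series (geometric M r)) by apply: is_cvg_geometric_series.
have cn : cvgn [normed series a].
  apply: (@series_le_cvg _ _ (geometric M r)) => //.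
  - by move=> n; rewrite normr_ge0.
  - by move=> n; rewrite /geometric mulr_ge0 // exprn_ge0.
have ca : cvgn (series a) by apply: normed_cvg.
split => //.
apply: le_trans (lim_series_norm cn) _.
apply: le_trans (lim_series_le cn cg ha) _.
by rewrite (cvg_lim _ (cvg_geometric_series (a:=M) rn)).
Qed.
Lemma series_shift (u : nat -> R) : cvgn (series u) ->
  limn (series u) = u 0%N + limn (series (fun k => u k.+1)).
Proof.
move=> cu.
have L := cvg_lim (@Rhausdorff R) cu.
have e : series (fun k => u k.+1) = (fun n => series u n.+1 - u 0%N).
  apply/funext => n; rewrite /series /= big_nat_recl //= addrC addKr.
  by apply: eq_bigr.
have : series (fun k => u k.+1) @ \oo --> limn (series u) - u 0%N.
  rewrite e; apply: cvgB; last exact: cvg_cst.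
  by rewrite (cvg_shiftS (series u)); apply: cvgP cu.
move/cvg_lim => ->; last exact: Rhausdorff.
by rewrite addrC subrK.
Qed.

Local Notation normc := Normc.normc.

Lemma normcX (x : R[i]) n : normc (x ^+ n) = normc x ^+ n.
Proof.
elim: n => [|n IH]; first by rewrite !expr0 Normc.normc1.
by rewrite !exprS Normc.normcM IH.
Qed.

Lemma normc_ge0 (x : R[i]) : (0:R) <= normc x.
Proof. by case: x => a b; rewrite /Normc.normc sqrtr_ge0. Qed.

Lemma Re_le (x : R[i]) : `|complex.Re x| <= normc x.
Proof.
case: x => a b /=; rewrite -sqrtr_sqr; rewrite ler_sqrt ?addr_ge0 ?sqr_ge0 //.
by rewrite lerDl sqr_ge0.
Qed.

Lemma Im_le (x : R[i]) : `|complex.Im x| <= normc x.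
Proof.
case: x => a b /=; rewrite -sqrtr_sqr; rewrite ler_sqrt ?addr_ge0 ?sqr_ge0 //.
by rewrite lerDr sqr_ge0.
Qed.

Lemma normc_le (a b : R) : normc (a +i* b)%C <= `|a| + `|b|.
Proof.
rewrite /Normc.normc -(ger0_norm (addr_ge0 (normr_ge0 a) (normr_ge0 b))).
rewrite -sqrtr_sqr; rewrite ler_sqrt ?addr_ge0 ?sqr_ge0 //.
rewrite sqrrD (real_normK (num_real a)) (real_normK (num_real b)).
by rewrite lerD2r lerDl mulrn_wge0 // mulr_ge0.
Qed.

Definition csum (q : R[i]) (c : nat -> R[i]) : R[i] :=
  ((limn (series (fun k => complex.Re (q ^+ k * c k)))) +i*
   (limn (series (fun k => complex.Im (q ^+ k * c k)))))%C.

Lemma csum_cvg (q : R[i]) (c : nat -> R[i]) M : normc q < 1 ->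
  (forall k, normc (c k) <= M) ->
  [/\ cvgn (series (fun k => complex.Re (q ^+ k * c k))),
      cvgn (series (fun k => complex.Im (q ^+ k * c k))) &
      normc (csum q c) <= M / (1 - normc q) + M / (1 - normc q)].
Proof.
move=> q1 hc.
have hb : forall k, normc (q ^+ k * c k) <= M * normc q ^+ k.
  move=> k; rewrite Normc.normcM normcX mulrC ler_wpM2r //.
  by rewrite exprn_ge0 // normc_ge0.
have [c1 b1] := @real_dom (fun k => complex.Re (q ^+ k * c k)) M (normc q)
  (normc_ge0 q) q1 (fun k => le_trans (Re_le _) (hb k)).
have [c2 b2] := @real_dom (fun k => complex.Im (q ^+ k * c k)) M (normc q)
  (normc_ge0 q) q1 (fun k => le_trans (Im_le _) (hb k)).
split => //; apply: le_trans (normc_le _ _) _.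
exact: lerD.
Qed.

Lemma ReM (q w : R[i]) : complex.Re (q * w) =
  complex.Re q * complex.Re w - complex.Im q * complex.Im w.
Proof. by case: q => u v; case: w => x y. Qed.
Lemma ImM (q w : R[i]) : complex.Im (q * w) =
  complex.Re q * complex.Im w + complex.Im q * complex.Re w.
Proof. by case: q => u v; case: w => x y /=; rewrite addrC. Qed.

Lemma csum_shift (q : R[i]) (c : nat -> R[i]) M : normc q < 1 ->
  (forall k, normc (c k) <= M) ->
  csum q c = c 0%N + q * csum q (fun k => c k.+1).
Proof.
move=> q1 hc.
have [ca cb _] := @csum_cvg q c M q1 hc.
have [ca' cb' _] := @csum_cvg q (fun k => c k.+1) M q1 (fun k => hc k.+1).
rewrite /csum (series_shift _ ca) (series_shift _ cb).
set A := limn (series (fun k => complex.Re (q ^+ k * c k.+1))).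
set B := limn (series (fun k => complex.Im (q ^+ k * c k.+1))).
have eA : (fun k => complex.Re (q ^+ k.+1 * c k.+1)) =
   (complex.Re q) *: (fun k => complex.Re (q ^+ k * c k.+1)) -
   (complex.Im q) *: (fun k => complex.Im (q ^+ k * c k.+1)).
  apply/funext => k /=; rewrite exprS -mulrA.
  by rewrite ReM.
have eB : (fun k => complex.Im (q ^+ k.+1 * c k.+1)) =
   (complex.Re q) *: (fun k => complex.Im (q ^+ k * c k.+1)) +
   (complex.Im q) *: (fun k => complex.Re (q ^+ k * c k.+1)).
  apply/funext => k /=; rewrite exprS -mulrA.
  by rewrite ImM.
rewrite eA eB lim_seriesB; try by apply: is_cvg_seriesZ.
rewrite lim_seriesD; try by apply: is_cvg_seriesZ.
rewrite !lim_seriesZ // -/A -/B /= !expr0 !mul1r.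
move: (c 0%N) A B => w A B; clear.
case: w => x y; case: q => u v /=.
by apply/eqP; rewrite eq_complex /= !eqxx.
Qed.

Lemma geo_le0 (x M r : R) : 0 <= r -> r < 1 ->
  (forall n, x <= M * r ^+ n) -> x <= 0.
Proof.
move=> r0 r1 h.
have rn : `|r| < 1 by rewrite ger0_norm.
have g := cvg_geometric M rn.
rewrite -(cvg_lim (@Rhausdorff R) g).
apply: limr_ge; first by apply: cvgP g.
by near=> n; apply: h.
Unshelve. all: by end_near.
Qed.

Lemma contr_zero (S : Type) (F : S -> S) (q : R[i]) (u : S -> R[i]) M :
  normc q < 1 -> (forall s, normc (u s) <= M) ->
  (forall s, u s = q * u (F s)) -> forall s, u s = 0.
Proof.
move=> q1 hb hu.
have it : forall n s, u s = q ^+ n * u (iter n F s).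
  elim=> [|n IH] s; first by rewrite expr0 mul1r.
  by rewrite IH [in LHS]hu exprSr -mulrA.
move=> s; apply: Normc.eq0_normc; apply/eqP; rewrite eq_le normc_ge0 andbT.
apply: (@geo_le0 _ M (normc q) (normc_ge0 q) q1) => n.
rewrite (it n s) Normc.normcM normcX mulrC ler_wpM2r //.
by rewrite exprn_ge0 // normc_ge0.
Qed.

Lemma scalar_unique (lam : R[i]) (S : Type) (Rm Ri : S -> S) (u : S -> R[i]) M :
  normc lam != 1 -> cancel Ri Rm ->
  (forall s, normc (u s) <= M) ->
  (forall s, lam * u (Rm s) = u s) -> forall s, u s = 0.
Proof.
move=> l1 c2 hb hu.
case: (ltrgtP (normc lam) 1) => [lt1|gt1|eq1]; last by rewrite eq1 eqxx in l1.
- by apply: (@contr_zero _ Rm lam u M lt1 hb) => s; rewrite hu.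
- have l0 : lam != 0.
    by apply: contraTneq gt1 => ->; rewrite Normc.normc0 ltr10.
  apply: (@contr_zero _ Ri lam^-1 _ M _ hb) => [|s].
    by rewrite Normc.normcV invf_lt1 // (lt_trans ltr01 gt1).
  by rewrite -(hu (Ri s)) c2 mulKf.
Qed.

Lemma scalar_exists (lam : R[i]) (S : Type) (Rm Ri : S -> S) (f : S -> R[i]) M :
  normc lam != 0 -> normc lam != 1 -> cancel Rm Ri ->
  (forall s, normc (f s) <= M) ->
  exists u : S -> R[i], (exists M', forall s, normc (u s) <= M') /\
     forall s, lam * u (Rm s) - u s = f s.
Proof.
move=> l0 l1 c1 hf.
case: (ltrgtP (normc lam) 1) => [lt1|gt1|eq1]; last by rewrite eq1 eqxx in l1.
- exists (fun s => - csum lam (fun k => f (iter k Rm s))); split.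
    exists (M / (1 - normc lam) + M / (1 - normc lam)) => s.
    rewrite normcN.
    by have [_ _ ] := @csum_cvg lam (fun k => f (iter k Rm s)) M lt1 (fun k => hf _).
  move=> s; rewrite (@csum_shift lam (fun k => f (iter k Rm s)) M lt1 (fun k => hf _)).
  have -> : (fun k => f (iter k.+1 Rm s)) = (fun k => f (iter k Rm (Rm s))).
    by apply/funext => k; rewrite iterSr.
  by rewrite /= mulrN opprK addrC addrK.
- have lam0 : lam != 0 by apply: contraNneq l0 => ->; rewrite Normc.normc0.
  set mu := lam^-1.
  have mu1 : normc mu < 1.
    by rewrite Normc.normcV invf_lt1 // (lt_trans ltr01 gt1).
  exists (fun s => mu * csum mu (fun k => f (iter k.+1 Ri s))); split.
    exists (normc mu * (M / (1 - normc mu) + M / (1 - normc mu))) => s.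
    rewrite Normc.normcM ler_wpM2l ?normc_ge0 //.
    by have [_ _ ] := @csum_cvg mu (fun k => f (iter k.+1 Ri s)) M mu1 (fun k => hf _).
  move=> s.
  have -> : (fun k => f (iter k.+1 Ri (Rm s))) = (fun k => f (iter k Ri s)).
    by apply/funext => k; rewrite iterSr c1.
  rewrite (@csum_shift mu (fun k => f (iter k Ri s)) M mu1 (fun k => hf _)) /=.
  by rewrite mulrA mulfV // mul1r addrK.
Qed.

Definition prev {l : nat} (v : 'cV[R[i]]_(l.+1)) (a : 'I_(l.+1)) : R[i] :=
  if val a is m.+1 then v (inord m) 0 else 0.

Lemma Lam_mul (l : nat) (lam : R[i]) (v : 'cV[R[i]]_(l.+1)) (a : 'I_(l.+1)) :
  (Lambda l lam *m v) a 0 = lam * v a 0 + prev v a.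
Proof.
rewrite !mxE (bigD1 a) //= mxE eqxx; congr (_ + _).
case: a => [[|m] ha] /=.
  apply: big1 => b hb; rewrite mxE eq_sym (negbTE hb) /= mul0r //.
have hm : (m < l.+1)%N by apply: ltn_trans ha.
rewrite (bigD1 (inord m)) /=; last first.
  by rewrite -val_eqE /= inordK // (ltn_eqF (ltnSn m)).
rewrite mxE -val_eqE /= inordK // (gtn_eqF (ltnSn m)) eqxx mul1r.
rewrite big1 ?addr0 // => b /andP [hb1 hb2]; rewrite mxE eq_sym (negbTE hb1).
case: eqP => [[e]|_]; last by rewrite mul0r.
by move: hb2; rewrite -val_eqE /= inordK // e eqxx.
Qed.


Lemma supnorm_ge n (v : 'cV[R[i]]_n) k : normc (v k 0) <= supnorm v.
Proof. by rewrite /supnorm (bigD1 k) //= le_max lexx. Qed.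

Lemma supnorm_le n (v : 'cV[R[i]]_n) (M : R) : 0 <= M ->
  (forall k, normc (v k 0) <= M) -> supnorm v <= M.
Proof.
move=> M0 h; rewrite /supnorm; elim/big_ind: _ => // x y hx hy.
by rewrite ge_max hx hy.
Qed.

Lemma boundedP (S : Type) n (f : S -> 'cV[R[i]]_n) :
  bounded_on f <-> exists M : R, 0 <= M /\ forall s k, normc (f s k 0) <= M.
Proof.
split.
  case=> M hM; exists (Num.max M 0); split; first by rewrite le_max lexx orbT.
  move=> s k; apply: le_trans (@supnorm_ge _ (f s) k) _.
  by apply: le_trans (hM s) _; rewrite le_max lexx.
case=> M [M0 hM]; exists M => s; exact: supnorm_le.
Qed.


Lemma main_lemma (lam : R[i]) (l : nat)
  (S : Type) (Rm : S -> S) (h : S -> 'cV[R[i]]_(l.+1)) :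
  Normc.normc lam != 0 -> Normc.normc lam != 1 ->
  bijective Rm ->
  bounded_on (fun s => h (Rm s) - invmx (Lambda l lam) *m h s) ->
  exists hh : S -> 'cV[R[i]]_(l.+1),
    [/\ (forall s, hh (Rm s) = invmx (Lambda l lam) *m hh s),
        bounded_on (fun s => hh s - h s) &
        forall g : S -> 'cV[R[i]]_(l.+1),
          (forall s, g (Rm s) = invmx (Lambda l lam) *m g s) ->
          bounded_on (fun s => g s - h s) -> g = hh].
Proof.
move=> l0 l1 [Ri c1 c2] hb.
have lam0 : lam != 0 by apply: contraNneq l0 => ->; rewrite Normc.normc0.
have LU : Lambda l lam \in unitmx.
  rewrite unitmxE det_trig; last first.
    apply/is_trig_mxP => i j hij; rewrite mxE -val_eqE /= (ltn_eqF hij).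
    by rewrite (ltn_eqF (ltn_trans hij (ltnSn _))).
  rewrite (eq_bigr (fun _ => lam)) => [|i _]; last by rewrite mxE eqxx.
  by rewrite prodr_const card_ord unitfE expf_neq0.
have eqv : forall x y : 'cV[R[i]]_(l.+1),
    (x = invmx (Lambda l lam) *m y) <-> (Lambda l lam *m x = y).
  by move=> x y; split => [->|<-]; [exact: mulKVmx | rewrite mulKmx].
move/boundedP: hb => [M0 [M00 hM0]].
pose e := fun s => Lambda l lam *m h (Rm s) - h s.
have he : forall s, e s = Lambda l lam *m (h (Rm s) - invmx (Lambda l lam) *m h s).
  by move=> s; rewrite mulmxBr mulKVmx.
have eE : forall s, e s = Lambda l lam *m h (Rm s) - h s by [].
clearbody e.
pose Me := normc lam * M0 + M0.
have Me0 : 0 <= Me by rewrite addr_ge0 // mulr_ge0 // normc_ge0.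
have eb : forall s a, normc (e s a 0) <= Me.
  move=> s a; rewrite he Lam_mul; apply: le_trans (le_normcD _ _) _; apply: lerD.
    by rewrite Normc.normcM ler_wpM2l ?normc_ge0 // (hM0 s a).
  by rewrite /prev; case: (val a) => [|m]; [rewrite Normc.normc0 | exact: hM0].
have P : forall n, exists u : S -> 'cV[R[i]]_(l.+1), exists Mu : R,
    [/\ 0 <= Mu, (forall s a, normc (u s a 0) <= Mu) &
     (forall s (a : 'I_(l.+1)), (val a < n)%N ->
        lam * u (Rm s) a 0 + prev (u (Rm s)) a - u s a 0 = - e s a 0)].
  elim=> [|n [u [Mu [Mu0 hu hue]]]].
    exists (fun _ => 0), 0; split => // s a; rewrite mxE Normc.normc0 //.
  case: (ltnP n l.+1) => hn; last first.
    exists u, Mu; split => // s a ha; apply: hue.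
    exact: leq_trans (ltn_ord a) hn.
  pose f := fun s => - e s (inord n) 0 - prev (u (Rm s)) (inord n).
  have fb : forall s, normc (f s) <= Me + Mu.
    move=> s; apply: le_trans (le_normcD _ _) _; rewrite !normcN; apply: lerD => //.
    by rewrite /prev; case: (val _) => [|m]; [rewrite Normc.normc0 | exact: hu].
  have [w [[Mw hw] hwe]] := @scalar_exists lam S Rm Ri f (Me + Mu) l0 l1 c1 fb.
  exists (fun s => \col_a (if val a == n then w s else u s a 0)), (Num.max Mu Mw).
  split; first by rewrite le_max Mu0.
    by move=> s a; rewrite mxE; case: eqP => _; rewrite le_max ?hw ?hu ?orbT.
  move=> s a ha.
  have hp : forall t, prev (\col_a (if val a == n then w t else u t a 0)) a
      = prev (u t) a.
    move=> t; rewrite /prev; move: ha; case: a => [[|m] hm] //= ha'.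
    rewrite mxE inordK; last exact: ltnW. by rewrite (ltn_eqF (ha' : (m < n)%N)).
  rewrite hp !mxE.
  case: (ltngtP a n) => [lt|gt|eq].
  - by rewrite hue.
  - by move: ha; rewrite ltnS leqNgt gt.
  - rewrite addrAC hwe /f.
    have -> : a = inord n by apply: val_inj; rewrite /= inordK.
    by rewrite subrK.
have [u [Mu [Mu0 hu hue]]] := P l.+1.
have Lu : forall s, Lambda l lam *m u (Rm s) = u s - e s.
  move=> s; apply/matrixP => a j; rewrite (ord1 j) Lam_mul !mxE.
  have H := hue s a (ltn_ord a).
  by rewrite -[X in X = _](subrK (u s a 0)) H addrC.
have hhR : forall s, h (Rm s) + u (Rm s) = invmx (Lambda l lam) *m (h s + u s).
  move=> s; apply/eqv; rewrite mulmxDr Lu eE.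
  rewrite opprB addrCA (addrCA (Lambda l lam *m h (Rm s))).
  by rewrite subrr addr0 addrC.
exists (fun s => h s + u s); split => //.
  apply/boundedP; exists Mu; split => // s a.
  by have -> : h s + u s - h s = u s by rewrite addrC addKr.
move=> g hg /boundedP [Mg [Mg0 hMg]].
pose d := fun s => g s - (h s + u s).
have db : forall a s, normc (d s a 0) <= Mg + Mu.
  move=> a s.
  have -> : d s a 0 = (g s - h s) a 0 - u s a 0 by rewrite /d !mxE opprD addrA.
  by apply: le_trans (le_normcD _ _) _; rewrite normcN; apply: lerD.
have dL : forall s, Lambda l lam *m d (Rm s) = d s.
  move=> s; rewrite /d mulmxBr.
  by rewrite (proj1 (eqv _ _) (hg s)) (proj1 (eqv _ _) (hhR s)).
have dz : forall n (a : 'I_(l.+1)), (val a < n)%N -> forall s, d s a 0 = 0.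
  elim=> [|n IH] a ha //.
  apply: (@scalar_unique lam S Rm Ri (fun s => d s a 0) (Mg + Mu) l1 c2 (db a)).
  move=> s /=.
  have := f_equal (fun v : 'cV[R[i]]_(l.+1) => v a 0) (dL s); rewrite /= Lam_mul => <-.
  suff -> : prev (d (Rm s)) a = 0 by rewrite addr0.
  rewrite /prev; move: ha; case: a => [[|m] hm] //= ha.
  apply: IH; change (nat_of_ord (@inord l m) < n)%N.
  by rewrite inordK // ltnW.
apply/funext => s; apply/matrixP => a j; rewrite (ord1 j).
have := dz _ a (ltnSn a) s; rewrite /d.
by move=> H; apply/eqP; rewrite -subr_eq0; apply/eqP; move: H; rewrite !mxE.
Qed.

End S.

Theorem proposition3p2 (R : realType) (lam : R[i]) (l : nat)
  (S : Type) (Rm : S -> S) (h : S -> 'cV[R[i]]_(l.+1)) :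
  Normc.normc lam != 0 -> Normc.normc lam != 1 ->
  bijective Rm ->
  bounded_on (fun s => h (Rm s) - invmx (Lambda l lam) *m h s) ->
  exists hh : S -> 'cV[R[i]]_(l.+1),
    [/\ (forall s, hh (Rm s) = invmx (Lambda l lam) *m hh s),
        bounded_on (fun s => hh s - h s) &
        forall g : S -> 'cV[R[i]]_(l.+1),
          (forall s, g (Rm s) = invmx (Lambda l lam) *m g s) ->
          bounded_on (fun s => g s - h s) -> g = hh].
Proof. exact: main_lemma. Qed.
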